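(* Suppose $\bm X \in \mathscr{E}_4^N$ and $\bm Y$ is a degree 4 pseudomoment matrix extending $\bm X$. Then $\bm Y \succeq \mathrm{vec}(\bm X)\mathrm{vec}(\bm X)^\top$, and every eigenvector of $\bm Y - \mathrm{vec}(\bm X)\mathrm{vec}(\bm X)^\top$ with nonzero eigenvalue lies in the subspace $\mathrm{vec}(\mathsf{pert}_{\mathscr{E}_2^N}(\bm X)) \subset \mathbb{R}^{N^2}$. Consequently, $$\mathrm{rank}(\bm Y) \le \dim \mathsf{pert}_{\mathscr{E}_2^N}(\bm X) + 1 = \frac{\mathrm{rank}(\bm X)(\mathrm{rank}(\bm X)+1)}{2} - \mathrm{rank}(\bm X^{\odot 2}) + 1 \le \frac{\mathrm{rank}(\bm X)(\mathrm{rank}(\bm X)+1)}{2}.$$ In particular, if $\bm X$ is an extreme point of $\mathscr{E}_2^N$ and is extended by some degree 4 pseudomoment matrix $\bm Y$, then $\mathrm{rank}(\bm Y) = \mathrm{rank}(\bm X) = 1$, and $\bm X = \bm x\bm x^\top$, $\bm Y = (\bm x\otimes\bm x)(\bm x\otimes \bm x)^\top$ for some $\bm x \in \{\pm1\}^N$.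
   Context: $\mathscr{E}_2^N := \{\bm X \in \mathbb{R}^{N\times N}_{\mathrm{sym}} : \bm X\succeq 0,\ X_{ii} = 1 \ \forall i\}$ (the elliptope). For a closed convex set $K$ in a real vector space $E$ and $\bm X \in K$, $\mathsf{pert}_K(\bm X) := \{\bm A \in E : \bm X \pm t\bm A \in K \text{ for all sufficiently small } t>0\}$; here $E = \mathbb{R}^{N\times N}_{\mathrm{sym}}$. For $\bm A \in \mathbb{R}^{N\times N}$, $\mathrm{vec}(\bm A)\in\mathbb{R}^{N^2}$ has entries $\mathrm{vec}(\bm A)_{(ij)} = A_{ij}$, indices $(ij)$ ordered lexicographically. $\bm X^{\odot 2}$ is the entrywise square of $\bm X$. A degree 4 pseudomoment matrix is a matrix $\bm Y \in \mathbb{R}^{N^2\times N^2}$, rows and columns indexed by pairs $(ij)\in[N]^2$ (lexicographically ordered), such that: (1) $\bm Y\succeq 0$; (2) $Y_{(ij)(kk)}$ does not depend on $k$; (3) $Y_{(ii)(ii)} = 1$ for all $i$; (4) $Y_{(ij)(k\ell)}$ is invariant under all permutations of the four indices $i,j,k,\ell$. Such $\bm Y$ extends $\bm X\in\mathbb{R}^{N\times N}_{\mathrm{sym}}$ if $Y_{(1i)(1j)} = X_{ij}$ for all $i,j$. $\mathscr{E}_4^N$ is the set of symmetric $\bm X \in \mathbb{R}^{N\times N}$ that are extended by some degree 4 pseudomoment matrix. *)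

(* Defs.v *)
From HB Require Import structures.
From mathcomp Require Import all_boot all_order all_algebra.
Set Implicit Arguments. Unset Strict Implicit. Unset Printing Implicit Defensive.
Import Order.TTheory GRing.Theory Num.Theory.
Local Open Scope ring_scope.

Section Defs.
Variable R : realFieldType.

Definition psd (n : nat) (A : 'M[R]_n) : Prop :=
  A^T = A /\ forall v : 'cV[R]_n, 0 <= (v^T *m A *m v) 0 0.

Definition elliptope2 (N : nat) (X : 'M[R]_N) : Prop :=
  X^T = X /\ psd X /\ forall i, X i i = 1.

Definition pertE2 (N : nat) (X A : 'M[R]_N) : Prop :=
  A^T = A /\ exists2 eps : R, 0 < eps &
    forall t : R, 0 < t -> t < eps ->
      elliptope2 (X + t *: A) /\ elliptope2 (X - t *: A).

(* vec(A), indices (ij) ordered lexicographically via mxvec_index *)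
Definition vecc (N : nat) (A : 'M[R]_N) : 'cV[R]_(N * N) := (mxvec A)^T.

Definition Yent (N : nat) (Y : 'M[R]_(N * N)) (i j k l : 'I_N) : R :=
  Y (mxvec_index i j) (mxvec_index k l).

Definition pseudomoment4 (N : nat) (Y : 'M[R]_(N * N)) : Prop :=
  [/\ psd Y,
      (forall i j k k', Yent Y i j k k = Yent Y i j k' k'),
      (forall i, Yent Y i i i i = 1) &
      (forall i j k l,
         [/\ Yent Y i j k l = Yent Y j i k l,
             Yent Y i j k l = Yent Y k j i l &
             Yent Y i j k l = Yent Y i j l k])].

(* Y extends X : Y_{(1i)(1j)} = X_ij (index 1 is the first index, ord0) *)
Definition extends (N : nat) (Y : 'M[R]_(N.+1 * N.+1)) (X : 'M[R]_N.+1) : Prop :=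
  forall i j, Yent Y ord0 i ord0 j = X i j.

Definition elliptope4 (N : nat) (X : 'M[R]_N.+1) : Prop :=
  X^T = X /\ exists Y, pseudomoment4 Y /\ extends Y X.

Definition hadamard_sq (N : nat) (X : 'M[R]_N) : 'M[R]_N :=
  \matrix_(i, j) (X i j ^+ 2).

Definition extreme_E2 (N : nat) (X : 'M[R]_N) : Prop :=
  elliptope2 X /\
  forall (A B : 'M[R]_N) (t : R), elliptope2 A -> elliptope2 B ->
    0 < t -> t < 1 -> X = t *: A + (1 - t) *: B -> A = X /\ B = X.

End Defs.

(* Main.v *)
Require Import Defs.
From HB Require Import structures.
From mathcomp Require Import all_boot all_order all_algebra.
From mathcomp Require Import ring lra zify.
Set Implicit Arguments. Unset Strict Implicit. Unset Printing Implicit Defensive.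
Import Order.TTheory GRing.Theory Num.Theory.
Import VectorInternalTheory.
Local Open Scope ring_scope.


Section Q.
Variable R : realFieldType.
Implicit Types n : nat.

Definition bf n (M : 'M[R]_n) (u v : 'cV[R]_n) := (u^T *m M *m v) 0 0.

Lemma bf_sym n (M : 'M[R]_n) u v : M^T = M -> bf M u v = bf M v u.
Proof.
move=> sM; rewrite /bf -[in RHS]sM.
have -> : (v^T *m M^T *m u) 0 0 = ((v^T *m M^T *m u)^T) 0 0 by rewrite [RHS]mxE.
by rewrite !trmx_mul !trmxK mulmxA.
Qed.

Lemma bfE n (M : 'M[R]_n) u v :
  bf M u v = \sum_i \sum_j u i 0 * M i j * v j 0.
Proof.
rewrite /bf mxE; under eq_bigr => j _ do rewrite mxE big_distrl /=.
rewrite exchange_big /=; apply: eq_bigr => i _; apply: eq_bigr => j _.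
by rewrite !mxE.
Qed.

Lemma bfDr n (M : 'M[R]_n) u v w : bf M u (v + w) = bf M u v + bf M u w.
Proof. by rewrite /bf mulmxDr mxE. Qed.
Lemma bfZr n (M : 'M[R]_n) u v s : bf M u (s *: v) = s * bf M u v.
Proof. by rewrite /bf -scalemxAr mxE. Qed.
Lemma bfDl n (M : 'M[R]_n) u v w : bf M (u + v) w = bf M u w + bf M v w.
Proof. by rewrite /bf linearD /= !mulmxDl mxE. Qed.
Lemma bfZl n (M : 'M[R]_n) u v s : bf M (s *: u) v = s * bf M u v.
Proof. by rewrite /bf linearZ /= -!scalemxAl mxE. Qed.
Lemma bfDm n (A B : 'M[R]_n) u v : bf (A + B) u v = bf A u v + bf B u v.
Proof. by rewrite /bf mulmxDr mulmxDl mxE. Qed.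
Lemma bfNm n (A : 'M[R]_n) u v : bf (- A) u v = - bf A u v.
Proof. by rewrite /bf mulmxN mulNmx mxE. Qed.
Lemma bfBm n (A B : 'M[R]_n) u v : bf (A - B) u v = bf A u v - bf B u v.
Proof. by rewrite bfDm bfNm. Qed.
Lemma bfZm n (A : 'M[R]_n) u v s : bf (s *: A) u v = s * bf A u v.
Proof. by rewrite /bf -scalemxAr -scalemxAl mxE. Qed.

Lemma mx11_mul (A B : 'M[R]_1) : (A *m B) 0 0 = A 0 0 * B 0 0.
Proof. by rewrite mxE big_ord1. Qed.

Lemma bf_rank1 n (c : 'cV[R]_n) u v :
  bf (c *m c^T) u v = (c^T *m u) 0 0 * (c^T *m v) 0 0.
Proof.
rewrite /bf mulmxA -mulmxA mx11_mul; congr (_ * _).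
have -> : (u^T *m c) 0 0 = ((u^T *m c)^T) 0 0 by rewrite [RHS]mxE.
by rewrite trmx_mul trmxK.
Qed.

Lemma bf_expand n (M : 'M[R]_n) v w s : M^T = M ->
  bf M (v + s *: w) (v + s *: w) =
  bf M v v + 2 * s * bf M w v + s ^+ 2 * bf M w w.
Proof.
move=> sM; rewrite !(bfDl, bfDr, bfZl, bfZr) (bf_sym v w sM); ring.
Qed.

Lemma psd_q0 n (M : 'M[R]_n) v : psd M -> bf M v v = 0 -> M *m v = 0.
Proof.
move=> [sM pM] q0.
suff H : forall u, bf M u v = 0.
  apply/colP => i; have := H (delta_mx i 0).
  by rewrite /bf trmx_delta -rowE -row_mul mxE => ->; rewrite mxE.
move=> u; set b := bf M u v; set a := bf M u u.
have a0 : 0 <= a := pM u.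
pose d := a + 1; have d0 : 0 < d by rewrite /d; lra.
pose s := - b / d.
have sd : s * d = - b by rewrite /s mulrVK // unitfE gt_eqF.
have : 0 <= bf M (v + s *: u) (v + s *: u) := pM _.
rewrite bf_expand // q0 -/a -/b add0r => h.
have h2 := mulr_ge0 h (sqr_ge0 d).
have e : (2 * s * b + s ^+ 2 * a) * d ^+ 2 = - b ^+ 2 * (a + 2).
  have -> : (2 * s * b + s ^+ 2 * a) * d ^+ 2 = 2 * (s * d) * b * d + (s * d) ^+ 2 * a by ring.
  rewrite sd /d; ring.
rewrite e in h2.
have : b ^+ 2 <= 0 by nra.
by move=> hb; apply/eqP; rewrite -sqrf_eq0 eq_le hb sqr_ge0.
Qed.


Lemma psd_CS n (M : 'M[R]_n) u v : psd M ->
  bf M u v ^+ 2 <= bf M u u * bf M v v.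
Proof.
move=> psdM; have [sM pM] := psdM.
set a := bf M u u; set b := bf M u v.
have a0 : 0 <= a := pM u.
have [az|apos] : a = 0 \/ 0 < a.
  by move: a0; rewrite le_eqVlt => /orP[/eqP<-|]; [left|right].
- have Mu := psd_q0 psdM az.
  have -> : b = 0 by rewrite /b (bf_sym u v sM) /bf -mulmxA Mu mulmx0 mxE.
  by rewrite az expr0n /= mul0r.
pose s := - b / a.
have sa : s * a = - b by rewrite /s mulrVK // unitfE gt_eqF.
have : 0 <= bf M (v + s *: u) (v + s *: u) := pM _.
rewrite bf_expand // -/a -/b => h.
have h2 := mulr_ge0 h (ltW apos).
have e : (bf M v v + 2 * s * b + s ^+ 2 * a) * a = a * bf M v v - b ^+ 2.
  have -> : (bf M v v + 2 * s * b + s ^+ 2 * a) * a = a * bf M v v + 2 * (s * a) * b + (s * a) ^+ 2 by ring.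
  rewrite sa; ring.
rewrite e in h2; lra.
Qed.

Lemma psd_schur n (M : 'M[R]_n) e : psd M -> 0 < bf M e e ->
  psd (M - (bf M e e)^-1 *: ((M *m e) *m (M *m e)^T)).
Proof.
move=> psdM apos; have [sM pM] := psdM; split.
  by rewrite linearB /= linearZ /= trmx_mul trmxK sM.
move=> v; change (0 <= bf (M - (bf M e e)^-1 *: ((M *m e) *m (M *m e)^T)) v v).
rewrite bfBm bfZm bf_rank1.
have -> : ((M *m e)^T *m v) 0 0 = bf M e v by rewrite /bf trmx_mul sM.
have := psd_CS e v psdM.
rewrite subr_ge0 mulrC -expr2 => h.
by rewrite ler_pdivrMl // mulrC.
Qed.


Lemma mul_delta_col n (A : 'M[R]_n) p i (k l : 'I_1) :
  (A *m (delta_mx p k : 'cV[R]_n)) i l = A i p.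
Proof. by rewrite [k]ord1 [l]ord1 -colE mxE. Qed.

Lemma bf_delta n (A : 'M[R]_n) p : bf A (delta_mx p 0 : 'cV[R]_n) (delta_mx p 0) = A p p.
Proof. by rewrite /bf trmx_delta -rowE -colE !mxE. Qed.

Lemma mxsymE n (A : 'M[R]_n) i j : A^T = A -> A i j = A j i.
Proof. by move=> sA; rewrite -[in LHS]sA mxE. Qed.

Lemma rank1E n (c d : 'cV[R]_n) i j : (c *m d^T) i j = c i 0 * d j 0.
Proof. by rewrite mxE big_ord1 mxE. Qed.

Lemma schurE n (A : 'M[R]_n) s (c : 'cV[R]_n) i j :
  (A - s *: (c *m c^T)) i j = A i j - s * (c i 0 * c j 0).
Proof. by rewrite !mxE big_ord1 !mxE. Qed.

Definition decomp n (X : 'M[R]_n) := exists m (lam : 'I_m -> R) (w : 'I_m -> 'cV[R]_n),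
  (forall i, 0 <= lam i) /\ X = \sum_i lam i *: (w i *m (w i)^T).

Lemma decomp_cons n (X : 'M[R]_n) a (c : 'cV[R]_n) : decomp X -> 0 <= a ->
  decomp (a *: (c *m c^T) + X).
Proof.
case=> m [lam [w [l0 ->]]] a0.
exists m.+1, (fun i : 'I_m.+1 => if unlift ord0 i is Some j then lam j else a),
  (fun i : 'I_m.+1 => if unlift ord0 i is Some j then w j else c); split.
  by move=> i; case: (unlift ord0 i).
by rewrite big_ord_recl /= unlift_none; congr (_ + _); apply: eq_bigr => i _; rewrite liftK.
Qed.

Lemma psd_decomp n (X : 'M[R]_n) : psd X -> decomp X.
Proof.
move=> psdX.
suff H : forall k (Z : 'M[R]_n), psd Z ->
    (forall i j : 'I_n, (k <= i)%N -> Z i j = 0) -> decomp Z.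
  by apply: (H n X psdX) => i j; rewrite leqNgt ltn_ord.
elim=> [|k IH] Z psdZ Zk.
  exists 0, (fun _ => 0), (fun _ => 0); split=> //; rewrite big_ord0.
  by apply/matrixP=> i j; rewrite mxE Zk.
case: (ltnP k n) => [kn|nk]; last first.
  apply: IH psdZ _ => i j ki; exfalso.
  by move: (leq_trans nk ki); rewrite leqNgt ltn_ord.
pose p := Ordinal kn; have [sZ pZ] := psdZ.
pose e : 'cV[R]_n := delta_mx p 0.
have aE : bf Z e e = Z p p by rewrite bf_delta.
have a0 : 0 <= bf Z e e := pZ _.
have [az|apos] : bf Z e e = 0 \/ 0 < bf Z e e.
  by move: a0; rewrite le_eqVlt => /orP[/eqP<-|]; [left|right].
  have Ze := psd_q0 psdZ az.
  have Zip i : Z i p = 0 by rewrite -(mul_delta_col Z p i 0 0) -/e Ze mxE.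
  apply: IH => // i j; rewrite leq_eqVlt => /orP[/eqP ki | ki]; last exact: Zk.
  have -> : i = p by apply/val_inj.
  by rewrite mxsymE.
set a := bf Z e e in aE a0 apos *.
set c := Z *m e.
have schur := psd_schur psdZ apos; rewrite -/a -/c in schur.
have -> : Z = a^-1 *: (c *m c^T) + (Z - a^-1 *: (c *m c^T)) by rewrite addrC subrK.
apply: decomp_cons; last by rewrite invr_ge0 ltW.
apply: IH => // i j ki.
rewrite schurE /c /e !mul_delta_col.
move: ki; rewrite leq_eqVlt => /orP[/eqP ki | ki].
  have -> : i = p by apply/val_inj.
  rewrite -aE (mxsymE j p sZ) mulrA mulVf ?mul1r ?subrr //.
  by rewrite gt_eqF.
by rewrite (Zk i j) // (Zk i p) // !mul0r mulr0 subrr.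
Qed.


Lemma XDX0 n (X : 'M[R]_n) (c : 'cV[R]_n) : psd X ->
  hadamard_sq X *m c = 0 -> X *m diag_mx c^T *m X = 0.
Proof.
move=> psdX Hc; have [sX _] := psdX.
have [m [lam [w [l0 Xe]]]] := psd_decomp psdX.
set D := diag_mx c^T.
pose sD p q := bf D (w p) (w q).
have sDE p q : sD p q = \sum_i w p i 0 * c i 0 * w q i 0.
  by rewrite /sD /bf mul_mx_diag mxE; apply: eq_bigr => i _; rewrite !mxE.
have step1 : X *m D *m X =
    \sum_p \sum_q (lam p * lam q * sD p q) *: (w p *m (w q)^T).
  rewrite [in LHS]Xe !mulmx_suml; apply: eq_bigr => p _.
  rewrite mulmx_sumr; apply: eq_bigr => q _.
  rewrite -!scalemxAl -scalemxAr.
  have -> : w p *m (w p)^T *m D *m (w q *m (w q)^T) =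
            w p *m ((w p)^T *m D *m w q) *m (w q)^T by rewrite !mulmxA.
  rewrite [(w p)^T *m D *m w q]mx11_scalar mul_mx_scalar -scalemxAl !scalerA.
  by congr (_ *: _); rewrite /sD /bf; ring.
have diag0 i : (X *m D *m X) i i = 0.
  have <- : (hadamard_sq X *m c) i 0 = 0 by rewrite Hc mxE.
  rewrite /D mul_mx_diag !mxE; apply: eq_bigr => j _.
  by rewrite !mxE (mxsymE j i sX); ring.
have E1 i : c i 0 * (X *m D *m X) i i =
    \sum_p \sum_q c i 0 * ((lam p * lam q * sD p q) * (w p i 0 * w q i 0)).
  rewrite step1 summxE big_distrr; apply: eq_bigr => p _.
  rewrite summxE big_distrr; apply: eq_bigr => q _; by rewrite mxE rank1E.
have E2 p q : \sum_i c i 0 * ((lam p * lam q * sD p q) * (w p i 0 * w q i 0))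
    = lam p * lam q * sD p q ^+ 2.
  transitivity (lam p * lam q * sD p q * sD p q); last by rewrite expr2 mulrA.
  rewrite [X in _ = _ * X]sDE big_distrr; apply: eq_bigr => i _ /=; ring.
have S0 : \sum_p \sum_q lam p * lam q * sD p q ^+ 2 = 0.
  have : \sum_i c i 0 * (X *m D *m X) i i = 0.
    by apply: big1 => i _; rewrite diag0 mulr0.
  rewrite (eq_bigr _ (fun i _ => E1 i)) exchange_big /= => h; apply: (eq_trans _ h).
  apply: eq_bigr => p _; rewrite exchange_big /=; apply: eq_bigr => q _.
  by rewrite E2.
have T0 p q : lam p * lam q * sD p q = 0.
  have ge0 p' q' : 0 <= lam p' * lam q' * sD p' q' ^+ 2.
    by apply: mulr_ge0; [apply: mulr_ge0|apply: sqr_ge0].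
  have I0 := psumr_eq0P (fun p _ => sumr_ge0 _ (fun q _ => ge0 p q)) S0.
  have := psumr_eq0P (fun q _ => ge0 p q) (I0 p isT) (i := q) isT.
  set t := lam p * lam q => h.
  have e2 : (t * sD p q) ^+ 2 = t * (t * sD p q ^+ 2) by ring.
  have : (t * sD p q) ^+ 2 = 0 by rewrite e2 h mulr0.
  by move/eqP; rewrite sqrf_eq0 => /eqP.
rewrite step1; apply: big1 => p _; apply: big1 => q _.
by rewrite T0 scale0r.
Qed.


Lemma col_mul m n p (A : 'M[R]_(m, n)) (B : 'M[R]_(n, p)) j :
  col j (A *m B) = A *m col j B.
Proof. by rewrite !colE mulmxA. Qed.

Lemma kerP n (X A : 'M[R]_n) :
  (A *m cokermx X = 0) <-> (forall v : 'cV[R]_n, X *m v = 0 -> A *m v = 0).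
Proof.
split=> [kA v Xv | H].
  have AX : (A <= X)%MS by rewrite submxE kA.
  have -> : A *m v = A *m pinvmx X *m (X *m v) by rewrite mulmxA mulmxKpV.
  by rewrite Xv mulmx0.
apply/matrixP => i j; rewrite [RHS]mxE.
have -> : (A *m cokermx X) i j = (A *m col j (cokermx X)) i 0 by rewrite -col_mul [RHS]mxE.
rewrite H ?mxE //.
by rewrite -col_mul mulmx_coker; apply/colP => k; rewrite !mxE.
Qed.

Lemma sum_ge_term (I : finType) (F : I -> R) i :
  (forall k, 0 <= F k) -> F i <= \sum_k F k.
Proof. by move=> F0; rewrite (bigD1 i) //= lerDl sumr_ge0. Qed.

Lemma bf_bound n (B : 'M[R]_n) (z : 'cV[R]_n) :
  `|bf B z z| <= (\sum_i \sum_j `|B i j|) * \sum_k z k 0 ^+ 2.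
Proof.
set S := \sum_k z k 0 ^+ 2.
have zS k : z k 0 ^+ 2 <= S by apply: (@sum_ge_term _ (fun k => z k 0 ^+ 2) k) => k'; apply: sqr_ge0.
rewrite bfE; apply: le_trans (ler_norm_sum _ _ _) _.
rewrite mulr_suml; apply: ler_sum => i _.
apply: le_trans (ler_norm_sum _ _ _) _.
rewrite mulr_suml; apply: ler_sum => j _.
rewrite !normrM.
have ha : `|z i 0| ^+ 2 <= S by rewrite -normrX ger0_norm ?sqr_ge0 ?zS.
have hb : `|z j 0| ^+ 2 <= S by rewrite -normrX ger0_norm ?sqr_ge0 ?zS.
have a0 := normr_ge0 (z i 0); have b0 := normr_ge0 (z j 0).
have ab : `|z i 0| * `|z j 0| <= S by nra.
rewrite mulrAC [_ * S]mulrC; apply: ler_wpM2r => //.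
Qed.

Lemma bf_XBX n (X B : 'M[R]_n) y : X^T = X ->
  bf (X *m B *m X) y y = bf B (X *m y) (X *m y).
Proof. by move=> sX; rewrite /bf trmx_mul sX !mulmxA. Qed.

Lemma bf_deltaL n (X : 'M[R]_n) k y : bf X (delta_mx k 0) y = (X *m y) k 0.
Proof. by rewrite /bf trmx_delta -rowE -row_mul mxE. Qed.

Lemma pert_of n (X A : 'M[R]_n) : elliptope2 X -> A^T = A ->
  (forall i, A i i = 0) -> A *m cokermx X = 0 -> pertE2 X A.
Proof.
move=> [sX [psdX dX]] sA dA kA.
have AX : (A <= X)%MS by rewrite submxE kA.
set pX := pinvmx X.
have A1 : A = A *m pX *m X by rewrite mulmxKpV.
have A2 : A = X *m pX^T *m A.
  by have := congr1 trmx A1; rewrite !trmx_mul sX sA mulmxA.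
set B := pX^T *m A *m pX.
have AXBX : A = X *m B *m X by rewrite {1}A2 {1}A1 /B !mulmxA.
set beta := \sum_i \sum_j `|B i j|.
have beta0 : 0 <= beta by apply: sumr_ge0 => i _; apply: sumr_ge0 => j _.
set K := beta * n%:R.
have K0 : 0 <= K by rewrite mulr_ge0 ?ler0n.
have bound y : `|bf A y y| <= K * bf X y y.
  rewrite {1}AXBX bf_XBX //; apply: le_trans (bf_bound B (X *m y)) _.
  rewrite /K -mulrA; apply: ler_wpM2l => //.
  have -> : n%:R * bf X y y = \sum_(k < n) bf X y y.
    by rewrite sumr_const card_ord mulr_natl.
  apply: ler_sum => k _.
  rewrite -bf_deltaL; apply: le_trans (psd_CS _ _ psdX) _.
  by rewrite bf_delta dX mul1r.
have Kp : 0 < K + 1 by lra.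
split=> //; exists (K + 1)^-1; first by rewrite invr_gt0.
move=> t t0 teps.
have tK : t * K <= 1.
  have inv1 : (K + 1)^-1 * (K + 1) = 1 by rewrite mulVf // gt_eqF.
  nra.
have pos y : 0 <= bf X y y + t * bf A y y /\ 0 <= bf X y y - t * bf A y y.
  have q0 : 0 <= bf X y y := psdX.2 y.
  have := bound y; move/ler_normlP => [h1 h2].
  split; nra.
split; (split; [|split]).
- by rewrite linearD linearZ /= sX sA.
- split; first by rewrite linearD linearZ /= sX sA.
  by move=> v; change (0 <= bf (X + t *: A) v v); rewrite bfDm bfZm; case: (pos v).
- by move=> i; rewrite !mxE dX dA mulr0 addr0.
- by rewrite linearB linearZ /= sX sA.
- split; first by rewrite linearB linearZ /= sX sA.
  by move=> v; change (0 <= bf (X - t *: A) v v); rewrite bfBm bfZm; case: (pos v).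
- by move=> i; rewrite !mxE dX dA mulr0 subr0.
Qed.

Lemma pert_char n (X A : 'M[R]_n) : elliptope2 X -> pertE2 X A ->
  [/\ A^T = A, (forall i, A i i = 0) & A *m cokermx X = 0].
Proof.
move=> [sX [psdX dX]] [sA [eps e0 H]].
pose t := eps / 2.
have t0 : 0 < t by rewrite /t; lra.
have te : t < eps by rewrite /t; lra.
have [[_ [psdP dP]] [_ [psdM dM]]] := H t t0 te.
split=> //.
  move=> i; have := dP i; rewrite !mxE dX => h.
  have /eqP : t * A i i = 0 by lra.
  by rewrite mulf_eq0 (gt_eqF t0) /= => /eqP.
apply/kerP => v Xv.
have qX : bf X v v = 0 by rewrite /bf -mulmxA Xv mulmx0 mxE.
have hP : 0 <= bf (X + t *: A) v v := psdP.2 v.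
have hM : 0 <= bf (X - t *: A) v v := psdM.2 v.
rewrite bfDm bfZm qX add0r pmulr_rge0 // in hP.
rewrite bfBm bfZm qX sub0r oppr_ge0 pmulr_rle0 // in hM.
have qA : bf A v v = 0 by apply/eqP; rewrite eq_le hM hP.
have : (X + t *: A) *m v = 0 by apply: psd_q0 => //; rewrite bfDm bfZm qX qA mulr0 addr0.
rewrite mulmxDl Xv add0r -scalemxAl => /eqP; rewrite scaler_eq0 (gt_eqF t0) /=.
by move/eqP.
Qed.


Lemma bf_deltas n (A : 'M[R]_n) p q :
  bf A (delta_mx p 0 : 'cV[R]_n) (delta_mx q 0) = A p q.
Proof. by rewrite /bf trmx_delta -rowE -colE !mxE. Qed.

Lemma bf_suml n (M : 'M[R]_n) (I : finType) (u : I -> 'cV[R]_n) v :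
  bf M (\sum_i u i) v = \sum_i bf M (u i) v.
Proof. by rewrite /bf linear_sum /= !mulmx_suml summxE. Qed.

Lemma bf_sumr n (M : 'M[R]_n) (I : finType) u (v : I -> 'cV[R]_n) :
  bf M u (\sum_i v i) = \sum_i bf M u (v i).
Proof. by rewrite /bf mulmx_sumr summxE. Qed.

Lemma bf_combo n (M : 'M[R]_n) (I J : finType) (a : I -> R) (b : J -> R) f g :
  bf M (\sum_i a i *: (delta_mx (f i) 0 : 'cV[R]_n)) (\sum_j b j *: delta_mx (g j) 0)
  = \sum_i \sum_j a i * b j * M (f i) (g j).
Proof.
rewrite bf_suml; apply: eq_bigr => i _; rewrite bf_sumr; apply: eq_bigr => j _.
by rewrite bfZl bfZr bf_deltas mulrA.
Qed.

Lemma sum_mxvec (m p : nat) (F : 'I_(m * p) -> R) :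
  \sum_K F K = \sum_i \sum_j F (mxvec_index i j).
Proof.
rewrite (reindex (uncurry (@mxvec_index m p))) /=; last exact: curry_mxvec_bij.
by rewrite pair_bigA /=; apply: eq_bigr => -[i j].
Qed.

Lemma vecc_E n (A : 'M[R]_n) i j : vecc A (mxvec_index i j) 0 = A i j.
Proof. by rewrite /vecc mxE mxvecE. Qed.

End Q.

Lemma mxsubE (R : realFieldType) m p (A B : 'M[R]_(m, p)) i j : (A - B) i j = A i j - B i j.
Proof. by rewrite !mxE. Qed.

Section Ysec.
Variable R : realFieldType.
Variable N : nat.
Local Notation n := N.+1.
Variables (X : 'M[R]_n) (Y : 'M[R]_(n * n)).
Hypothesis PY : pseudomoment4 Y.
Hypothesis EX : extends Y X.

Local Notation y := (Yent Y).

Lemma psdY : psd Y. Proof. by case: PY. Qed.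
Lemma symY : Y^T = Y. Proof. by case: psdY. Qed.
Lemma s12 i j k l : y i j k l = y j i k l.
Proof. by case: PY => _ _ _ /(_ i j k l) []. Qed.
Lemma s13 i j k l : y i j k l = y k j i l.
Proof. by case: PY => _ _ _ /(_ i j k l) []. Qed.
Lemma s34 i j k l : y i j k l = y i j l k.
Proof. by case: PY => _ _ _ /(_ i j k l) []. Qed.
Lemma s23 i j k l : y i j k l = y i k j l.
Proof. by rewrite (s12 i j) (s13 j i) (s12 k i). Qed.
Lemma sT i j k l : y i j k l = y k l i j.
Proof. by rewrite /Yent (mxsymE _ _ symY). Qed.
Lemma c2 i j k k' : y i j k k = y i j k' k'.
Proof. by case: PY => _ H _ _; apply: H. Qed.
Lemma c3 i : y i i i i = 1.
Proof. by case: PY => _ _ H _; apply: H. Qed.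
Lemma y00 i j : y i j ord0 ord0 = X i j.
Proof. by rewrite (s12 i j) (s13 j i) (s34 ord0 i); apply: EX. Qed.
Lemma yii i k l : y i i k l = X k l.
Proof. by rewrite sT (c2 k l i ord0) y00. Qed.
Lemma ykk i j k : y k i k j = X i j.
Proof. by rewrite s23 yii. Qed.
Lemma yk2 i j k : y i k j k = X i j.
Proof. by rewrite (s12 i k) (s34 k i) ykk. Qed.
Lemma symX : X^T = X.
Proof. by apply/matrixP => i j; rewrite mxE -!EX sT. Qed.
Lemma diagX i : X i i = 1.
Proof. by rewrite -(ykk i i i) c3. Qed.

Lemma psdX : psd X.
Proof.
split; first exact: symX.
move=> v; change (0 <= bf X v v).
pose p := \sum_i v i 0 *: (delta_mx (mxvec_index i (ord0 : 'I_n)) 0 : 'cV[R]_(n * n)).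
have := (psdY.2 p); change (0 <= bf Y p p -> 0 <= bf X v v).
rewrite bf_combo bfE.
suff -> : \sum_i \sum_j v i 0 * v j 0 * Y (mxvec_index i ord0) (mxvec_index j ord0)
   = \sum_i \sum_j v i 0 * X i j * v j 0 by [].
apply: eq_bigr => i _; apply: eq_bigr => j _.
by rewrite -[Y _ _]/(y i ord0 j ord0) yk2 mulrAC.
Qed.

Lemma elX : elliptope2 X.
Proof. by split; [exact: symX | split; [exact: psdX | exact: diagX]]. Qed.

Local Notation vX := (vecc X).
Local Notation Z := (Y - vX *m vX^T).

Lemma Ye : Y *m (delta_mx (mxvec_index (ord0 : 'I_n) (ord0 : 'I_n)) 0 : 'cV[R]_(n * n)) = vX.
Proof.
apply/colP => I; rewrite mul_delta_col; case/mxvec_indexP: I => i j.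
by rewrite vecc_E -[Y _ _]/(y i j ord0 ord0) y00.
Qed.

Lemma psdZ : psd Z.
Proof.
have := @psd_schur R _ Y (delta_mx (mxvec_index (ord0 : 'I_n) (ord0 : 'I_n)) 0) psdY.
rewrite bf_deltas -[Y _ _]/(y ord0 ord0 ord0 ord0) c3 Ye invr1 scale1r.
by apply; apply: ltr01.
Qed.

Lemma symZ : Z^T = Z. Proof. by case: psdZ. Qed.

Lemma ZE i j k l :
  Z (mxvec_index i j) (mxvec_index k l) = y i j k l - X i j * X k l.
Proof. by rewrite mxsubE rank1E !vecc_E. Qed.


Lemma range_pert (w : 'cV[R]_(n * n)) : pertE2 X (vec_mx (Z *m w)^T).
Proof.
set u := Z *m w; set A := vec_mx u^T.
have AE i j : A i j = u (mxvec_index i j) 0 by rewrite /A !mxE.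
apply: pert_of elX _ _ _.
- apply/matrixP => i j; rewrite mxE !AE /u !mxE; apply: eq_bigr => K _.
  case/mxvec_indexP: K => k l.
  by rewrite !ZE (s12 j i) (mxsymE j i symX).
- move=> i; rewrite AE /u mxE; apply: big1 => K _; case/mxvec_indexP: K => k l.
  by rewrite ZE yii diagX mul1r subrr mul0r.
apply/kerP => v Xv; apply/colP => k; rewrite [RHS]mxE.
pose p := \sum_i v i 0 *: (delta_mx (mxvec_index k i) 0 : 'cV[R]_(n * n)).
have qX : bf X v v = 0 by rewrite /bf -mulmxA Xv mulmx0 mxE.
have EY : \sum_i \sum_j v i 0 * v j 0 * Y (mxvec_index k i) (mxvec_index k j) = bf X v v.
  rewrite bfE; apply: eq_bigr => i _; apply: eq_bigr => j _.
  by rewrite -[Y _ _]/(y k i k j) ykk mulrAC.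
have E : bf Z p p = - ((vX^T *m p) 0 0 * (vX^T *m p) 0 0).
  by rewrite bfBm bf_rank1 bf_combo EY qX sub0r.
have qZ : bf Z p p = 0.
  have h0 : 0 <= bf Z p p := psdZ.2 p.
  rewrite E in h0 *; have := sqr_ge0 ((vX^T *m p) 0 0); rewrite expr2; lra.
have Zp := psd_q0 psdZ qZ.
have -> : (A *m v) k 0 = bf Z w p.
  rewrite mxE bf_sumr; apply: eq_bigr => i _.
  rewrite bfZr (bf_sym _ _ symZ) bf_deltaL AE mulrC.
  done.
by rewrite /bf -mulmxA Zp mulmx0 mxE.
Qed.

End Ysec.


Section V.
Variables (F : fieldType) (m p : nat).
Definition v2m (u : 'rV[F]_(m * p)) : 'rV[F]_(m * p) := v2r (vec_mx u : 'M[F]_(m, p)).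
Fact v2m_linear : linear v2m.
Proof. by move=> a u v; rewrite /v2m linearP /= linearP. Qed.
HB.instance Definition _ := GRing.isLinear.Build F _ _ _ v2m v2m_linear.

Lemma v2m_inj : injective v2m.
Proof. move=> u v h; apply: (can_inj vec_mxK); move: h; rewrite /v2m; exact: (@v2r_inj F 'M[F]_(m, p)). Qed.

Definition Pm := lin1_mx v2m.
Lemma PmE u : u *m Pm = v2m u.
Proof. by rewrite mul_rV_lin1. Qed.

Lemma Pm_free : row_free Pm.
Proof.
rewrite -kermx_eq0; apply/eqP/row_matrixP => i; rewrite row0.
apply: v2m_inj; rewrite linear0 -PmE.
by rewrite -row_mul mulmx_ker row0.
Qed.

Lemma vspace_of_mx k (K : 'M[F]_(k, m * p)) :
  exists U : {vspace 'M[F]_(m, p)},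
    (forall A, A \in U = (mxvec A <= K)%MS) /\ \dim U = \rank K.
Proof.
exists (@mx2vs F 'M[F]_(m, p) _ (K *m Pm)); split.
  move=> A; rewrite memvE /subsetv /vline !genmxE.
  have -> : v2r A = mxvec A *m Pm by rewrite PmE /v2m mxvecK.
  by rewrite submxMfree // Pm_free.
by rewrite /dimv genmxE mxrankMfree // Pm_free.
Qed.
End V.


Lemma sum_le_min (a r : nat) : (\sum_(b < r) ((b <= a)%N : nat) = minn r a.+1)%N.
Proof.
elim: r => [|r IH]; first by rewrite big_ord0.
by rewrite big_ord_recr /= IH; case: (leqP r a) => h /=; lia.
Qed.

Lemma sum_succ (r : nat) : (2 * \sum_(a < r) a.+1 = r * (r + 1))%N.
Proof.
elim: r => [|r IH]; first by rewrite big_ord0.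
rewrite big_ord_recr /= mulnDr IH; lia.
Qed.

Section SymDim.
Variables (R : fieldType) (r : nat).

Definition symmx : 'M[R]_(r * r) := kermx (1%:M - lin_mx (@trmx R r r)).

Lemma symP u : (u <= symmx)%MS = ((vec_mx u)^T == vec_mx u).
Proof.
rewrite sub_kermx mulmxBr mulmx1 mul_rV_lin subr_eq0.
apply/eqP/eqP => [h | h]; first by rewrite [in RHS]h mxvecK.
by apply: (can_inj (@vec_mxK _ r r)); rewrite mxvecK -[RHS]/((vec_mx u)^T) h.
Qed.

Definition Pl := [set pq : 'I_r * 'I_r | (pq.2 <= pq.1)%N].
Local Notation m := #|Pl|.
Definition fP (i : 'I_m) : 'I_(r * r) := mxvec_index (enum_val i).1 (enum_val i).2.
Definition Ext : 'M[R]_(r * r, m) := \matrix_(K, i) (K == fP i)%:R.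

Lemma ExtE (u : 'rV[R]_(r * r)) i : (u *m Ext) 0 i = u 0 (fP i).
Proof.
rewrite mxE (bigD1 (fP i)) //= mxE eqxx mulr1 big1 ?addr0 // => K /negPf nK.
by rewrite mxE nK mulr0.
Qed.

Lemma fP_cover (a b : 'I_r) : (b <= a)%N -> exists i, fP i = mxvec_index a b.
Proof.
move=> ba; have Pab : (a, b) \in Pl by rewrite inE.
by exists (enum_rank_in Pab (a, b)); rewrite /fP enum_rankK_in.
Qed.

Lemma sym_ext0 (u : 'rV[R]_(r * r)) : (u <= symmx)%MS -> u *m Ext = 0 -> u = 0.
Proof.
rewrite symP => /eqP su uE; apply/rowP => K; rewrite [RHS]mxE.
have uv a b : u 0 (mxvec_index a b) = vec_mx u a b by rewrite mxE.
case/mxvec_indexP: K => a b.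
case: (leqP b a) => [ba | ab].
  have [i fi] := fP_cover ba.
  by rewrite -fi -ExtE uE mxE.
have [i fi] := fP_cover (ltnW ab).
by rewrite uv -su mxE -uv -fi -ExtE uE mxE.
Qed.

Lemma cap0 : (symmx :&: kermx Ext)%MS = 0.
Proof.
apply/row_matrixP => i; rewrite row0; apply: sym_ext0.
  exact: submx_trans (row_sub _ _) (capmxSl _ _).
by apply/eqP; rewrite -sub_kermx; exact: submx_trans (row_sub _ _) (capmxSr _ _).
Qed.

Lemma full : (1%:M <= symmx *m Ext)%MS.
Proof.
apply/row_subP => i.
set pq := enum_val i.
pose C : 'M[R]_r := \matrix_(x, y)
   (((x == pq.1) && (y == pq.2)) || ((x == pq.2) && (y == pq.1)))%:R.
have Cs : (mxvec C <= symmx)%MS.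
  rewrite symP mxvecK; apply/eqP/matrixP => x y; rewrite !mxE.
  by rewrite orbC (andbC (y == _)) (andbC (y == _)).
have -> : row i 1%:M = mxvec C *m Ext; last exact: submxMr.
apply/rowP => j; rewrite ExtE /fP mxvecE !mxE.
have Pi := enum_valP i; have Pj := enum_valP j.
rewrite !inE -/pq in Pi Pj.
case: (eqVneq i j) => [<-|ij]; first by rewrite !eqxx.
have nB1 : ~~ (((enum_val j).1 == pq.1) && ((enum_val j).2 == pq.2)).
  apply/andP => -[/eqP e1 /eqP e2]; case/eqP: ij; apply: enum_val_inj.
  by rewrite -/pq [RHS]surjective_pairing e1 e2 -surjective_pairing.
have nB2 : ~~ (((enum_val j).1 == pq.2) && ((enum_val j).2 == pq.1)).
  apply/andP => -[/eqP e1 /eqP e2]; apply: (negP nB1).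
  have eab : pq.1 = pq.2 by apply/val_inj/eqP; rewrite eqn_leq Pi -e1 -e2 Pj.
  by rewrite e1 e2 eab !eqxx.
by rewrite (negPf nB1) (negPf nB2).
Qed.

Lemma rank_symmx : \rank symmx = ((r * (r + 1)) %/ 2)%N.
Proof.
have := mxrank_mul_ker symmx Ext; rewrite cap0 mxrank0 addn0 => <-.
have -> : \rank (symmx *m Ext) = m.
  apply/eqP; rewrite eqn_leq rank_leq_col /=.
  by have := mxrankS full; rewrite mxrank1.
have -> : m = (\sum_(a < r) a.+1)%N.
  rewrite /Pl -sum1dep_card big_mkcond /=.
  rewrite -(pair_bigA _ (fun a b : 'I_r => if (b <= a)%N then 1%N else 0%N)) /=.
  apply: eq_bigr => a _.
  rewrite -(@eq_bigr _ _ _ _ _ _ (fun b : 'I_r => ((b <= a)%N : nat))); last by move=> b _; case: ifP.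
  by rewrite sum_le_min; apply/minn_idPr; apply: ltn_ord.
by rewrite -sum_succ mulKn.
Qed.

End SymDim.

Section Dim.
Variable R : realFieldType.
Variable n : nat.
Variable X : 'M[R]_n.
Hypothesis eX : elliptope2 X.

Local Notation r := (\rank X).
Definition Bs : 'M[R]_(r, n) := locked (row_base X).
Lemma Bs_free : row_free Bs. Proof. by rewrite /Bs -lock; exact: row_base_free. Qed.
Lemma Bs_eq : (Bs :=: X)%MS. Proof. by rewrite /Bs -lock; exact: eq_row_base. Qed.

Definition Phi : 'M[R]_(r * r, n * n) := lin_mulmx Bs^T *m lin_mulmxr Bs.

Lemma PhiE (C : 'M[R]_r) : mxvec C *m Phi = mxvec (Bs^T *m C *m Bs).
Proof. by rewrite /Phi mulmxA !mul_vec_lin. Qed.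

Lemma PhiE' (c : 'rV[R]_(r * r)) : vec_mx (c *m Phi) = Bs^T *m vec_mx c *m Bs.
Proof. by rewrite -{1}[c]vec_mxK PhiE mxvecK. Qed.

Lemma Bs_coker : Bs *m cokermx X = 0.
Proof. by apply/eqP; rewrite -submxE Bs_eq. Qed.

Definition Smx := symmx R r *m Phi.

Lemma memS (u : 'rV[R]_(n * n)) : (u <= Smx)%MS <->
  ((vec_mx u)^T = vec_mx u /\ vec_mx u *m cokermx X = 0).
Proof.
split.
  case/submxP => D ->; rewrite mulmxA.
  have : (D *m symmx R r <= symmx R r)%MS by apply: submxMl.
  rewrite symP => /eqP cs; rewrite PhiE'.
  split; first by rewrite !trmx_mul trmxK cs mulmxA.
  by rewrite -mulmxA Bs_coker mulmx0.
case=> sA kA.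
have AX : (vec_mx u <= Bs)%MS by rewrite Bs_eq submxE kA.
set A := vec_mx u in sA kA AX *.
set pB := pinvmx Bs.
have A1 : A = A *m pB *m Bs by rewrite mulmxKpV.
have A2 : A = Bs^T *m pB^T *m A.
  by have := congr1 trmx A1; rewrite !trmx_mul sA mulmxA.
set C := pB^T *m A *m pB.
have AC : A = Bs^T *m C *m Bs by rewrite {1}A2 {1}A1 /C !mulmxA.
have Cs : (mxvec C <= symmx R r)%MS.
  by rewrite symP mxvecK /C [(pB^T *m A *m pB)^T]trmx_mul [(pB^T *m A)^T]trmx_mul trmxK sA mulmxA.
have -> : u = mxvec C *m Phi by rewrite PhiE -AC /A vec_mxK.
exact: submxMr.
Qed.

Lemma row_free_inj m p (A : 'M[R]_(m, p)) :
  (forall v : 'rV[R]_m, v *m A = 0 -> v = 0) -> row_free A.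
Proof.
move=> H; rewrite -kermx_eq0; apply/eqP/row_matrixP => i; rewrite row0.
by apply: H; rewrite -row_mul mulmx_ker row0.
Qed.

Lemma Phi_free : row_free Phi.
Proof.
apply: row_free_inj => c cP.
have := congr1 vec_mx cP; rewrite PhiE' linear0 => /eqP.
rewrite mulmx_free_eq0 ?Bs_free // => /eqP/(congr1 trmx).
rewrite trmx_mul trmxK linear0 => /eqP; rewrite mulmx_free_eq0 ?Bs_free //.
by move/eqP/(congr1 trmx); rewrite trmxK linear0 => /(congr1 mxvec); rewrite vec_mxK linear0.
Qed.

Lemma rank_Smx : \rank Smx = ((r * (r + 1)) %/ 2)%N.
Proof. by rewrite /Smx mxrankMfree ?Phi_free // rank_symmx. Qed.


Definition Dg : 'M[R]_(n * n, n) := \matrix_(K, i) (K == mxvec_index i i)%:R.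

Lemma DgE (u : 'rV[R]_(n * n)) i : (u *m Dg) 0 i = vec_mx u i i.
Proof.
rewrite mxE (bigD1 (mxvec_index i i)) //= mxE eqxx mulr1 big1 ?addr0.
  by rewrite mxE.
by move=> K /negPf nK; rewrite mxE nK mulr0.
Qed.

Definition Vmx := (Smx :&: kermx Dg)%MS.

Lemma memV (u : 'rV[R]_(n * n)) : (u <= Vmx)%MS <-> pertE2 X (vec_mx u).
Proof.
rewrite /Vmx sub_capmx sub_kermx; split.
  move/andP => [/memS [sA kA] /eqP D0].
  by apply: pert_of eX sA _ kA => i; rewrite -DgE D0 mxE.
move=> P; have [sA dA kA] := pert_char eX P.
apply/andP; split; first by apply/memS.
by apply/eqP/rowP => i; rewrite DgE dA mxE.
Qed.

Lemma diag_orth (A : 'M[R]_n) (c : 'cV[R]_n) : A^T = A -> A *m cokermx X = 0 ->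
  hadamard_sq X *m c = 0 -> \sum_k A k k * c k 0 = 0.
Proof.
move=> sA kA Hc; have [sX [psdX dX]] := eX.
have AX : (A <= X)%MS by rewrite submxE kA.
set pX := pinvmx X.
have A1 : A = A *m pX *m X by rewrite mulmxKpV.
have A2 : A = X *m pX^T *m A.
  by have := congr1 trmx A1; rewrite !trmx_mul sX sA mulmxA.
set B := pX^T *m A *m pX.
have AXBX : A = X *m B *m X by rewrite {1}A2 {1}A1 /B !mulmxA.
have XDX := XDX0 psdX Hc.
transitivity (\tr (A *m diag_mx c^T)).
  by rewrite /mxtrace; apply: eq_bigr => k _; rewrite mul_mx_diag !mxE.
rewrite AXBX -mulmxA mxtrace_mulC !mulmxA XDX !mul0mx.
by rewrite /mxtrace big1 // => k _; rewrite mxE.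
Qed.

Lemma SD_sub : (Smx *m Dg <= hadamard_sq X)%MS.
Proof.
apply/row_subP => i; rewrite row_mul.
have /memS [sA kA] : (row i Smx <= Smx)%MS := row_sub _ _.
set u := row i Smx in sA kA *.
rewrite submxE; apply/eqP/rowP => j; rewrite [RHS]mxE.
have -> : (u *m Dg *m cokermx (hadamard_sq X)) 0 j =
    \sum_k vec_mx u k k * (col j (cokermx (hadamard_sq X))) k 0.
  by rewrite mxE; apply: eq_bigr => k _; rewrite DgE !mxE.
apply: diag_orth sA kA _.
by rewrite -col_mul mulmx_coker; apply/colP => k; rewrite !mxE.
Qed.

Lemma H_sub : (hadamard_sq X <= Smx *m Dg)%MS.
Proof.
apply/row_subP => i.
have [sX _] := eX.
set A := col i X *m row i X.
have sA : A^T = A by rewrite /A trmx_mul tr_row tr_col sX.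
have kA : A *m cokermx X = 0 by rewrite /A -mulmxA -row_mul mulmx_coker row0 mulmx0.
have AS : (mxvec A <= Smx)%MS by apply/memS; rewrite mxvecK.
have -> : row i (hadamard_sq X) = mxvec A *m Dg.
  apply/rowP => k; rewrite DgE mxvecK /A !mxE big_ord1 !mxE (mxsymE k i sX).
  by rewrite expr2.
exact: submxMr.
Qed.

Lemma rank_formula :
  (\rank Vmx + \rank (hadamard_sq X))%N = ((r * (r + 1)) %/ 2)%N.
Proof.
have := mxrank_mul_ker Smx Dg; rewrite rank_Smx => <-.
have -> : \rank (Smx *m Dg) = \rank (hadamard_sq X).
  by apply/eqmx_rank/andP; split; [exact: SD_sub | exact: H_sub].
by rewrite addnC.
Qed.

End Dim.

Theorem theorem3 (R : realFieldType) (N : nat) (X : 'M[R]_N.+1)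
    (Y : 'M[R]_(N.+1 * N.+1)) :
  elliptope4 X -> pseudomoment4 Y -> extends Y X ->
  let M := vecc X *m (vecc X)^T in
  let r := \rank X in
  [/\ psd (Y - M),
      (forall (v : 'cV[R]_(N.+1 * N.+1)) (lam : R),
          v != 0 -> lam != 0 -> (Y - M) *m v = lam *: v ->
          exists A : 'M[R]_N.+1, pertE2 X A /\ v = vecc A),
      (exists V : {vspace 'M[R]_N.+1},
          [/\ (forall A, A \in V <-> pertE2 X A),
              (\rank Y <= \dim V + 1)%N,
              (\dim V + \rank (hadamard_sq X) = (r * (r + 1)) %/ 2)%N &
              (\dim V + 1 <= (r * (r + 1)) %/ 2)%N]) &
      (extreme_E2 X ->
         [/\ \rank Y = 1%N, r = 1%N &
             exists x : 'cV[R]_N.+1,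
               [/\ (forall i, x i 0 = 1 \/ x i 0 = -1),
                   X = x *m x^T &
                   Y = vecc (x *m x^T) *m (vecc (x *m x^T))^T]])].
Proof.
move=> _ PY EX M r.
have eX := elX PY EX.
have sX := symX PY EX.
have vecZ (w : 'cV[R]_(N.+1 * N.+1)) : vecc (vec_mx ((Y - M) *m w)^T) = (Y - M) *m w.
  by rewrite /vecc vec_mxK trmxK.
split.
- exact: psdZ PY EX.
- move=> v lam v0 l0 Hv.
  exists (vec_mx ((Y - M) *m (lam^-1 *: v))^T); split; first exact: range_pert.
  by rewrite vecZ -scalemxAr Hv scalerA mulVf // scale1r.
- have [V [memVU dimV]] := vspace_of_mx (Vmx X).
  have form := rank_formula eX.
  exists V; split.
  + by move=> A; rewrite memVU; have := memV eX (mxvec A); rewrite mxvecK.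
  + have ZV : ((Y - M) <= Vmx X)%MS.
      apply/row_subP => j.
      have -> : row j (Y - M) = ((Y - M) *m (row j 1%:M)^T)^T.
        by rewrite trmx_mul trmxK (symZ PY EX) -row_mul mul1mx.
      by apply/memV => //; apply: range_pert.
    have -> : Y = (Y - M) + M by rewrite subrK.
    apply: leq_trans (mxrank_add _ _) _.
    rewrite dimV; apply: leq_add; first exact: mxrankS.
    exact: leq_trans (mxrankM_maxl _ _) (rank_leq_col _).
  + by rewrite dimV.
  + rewrite dimV -form leq_add2l lt0n mxrank_eq0.
    apply/eqP => H0; have := congr1 (fun A : 'M[R]_N.+1 => A ord0 ord0) H0.
    by rewrite /= !mxE (diagX PY EX) expr1n => /eqP; rewrite oner_eq0.
move=> [_ ext].
have pert0 A : pertE2 X A -> A = 0.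
  move=> [sA [eps e0 H]].
  pose t := eps / 2.
  have t0 : 0 < t by rewrite /t; lra.
  have te : t < eps by rewrite /t; lra.
  have [eP eM] := H t t0 te.
  have h2 : (0 : R) < 2^-1 by rewrite invr_gt0; lra.
  have h2' : (2^-1 : R) < 1 by rewrite invf_lt1; lra.
  have eqX : X = 2^-1 *: (X + t *: A) + (1 - 2^-1) *: (X - t *: A).
    apply/matrixP => i j; rewrite !mxE.
    have -> : (1 - 2^-1 : R) = 2^-1.
      by apply/(@mulIf _ 2); rewrite ?pnatr_eq0 // mulrBl mulVf ?pnatr_eq0 // mul1r; lra.
    rewrite -mulrDr (_ : X i j + t * A i j + (X i j - t * A i j) = 2 * X i j); last by ring.
    by rewrite mulrA mulVf ?pnatr_eq0 // mul1r.
  have [h _] := ext _ _ _ eP eM h2 h2' eqX.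
  have tA : t *: A = 0 by rewrite -(addKr X (t *: A)) h addNr.
  by move/eqP: tA; rewrite scaler_eq0 (gt_eqF t0) /= => /eqP.
have Z0 : Y - M = 0.
  apply/matrixP => i j; rewrite [RHS]mxE.
  have := pert0 _ (range_pert PY EX (delta_mx j 0)).
  move/(congr1 mxvec); rewrite vec_mxK linear0 => /(congr1 trmx); rewrite trmxK linear0 => h.
  by rewrite -(mul_delta_col (Y - M) j i 0 0) h mxE.
have YM : Y = M by apply/eqP; rewrite -subr_eq0 Z0.
have yXX i j k l : Yent Y i j k l = X i j * X k l by rewrite /Yent YM rank1E !vecc_E.
pose x : 'cV[R]_N.+1 := col ord0 X.
have Xx : X = x *m x^T.
  apply/matrixP => i j; rewrite rank1E !mxE -[LHS]EX yXX.
  by rewrite (mxsymE ord0 i sX) (mxsymE ord0 j sX).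
split.
- apply/eqP; rewrite eqn_leq; apply/andP; split.
    by rewrite YM; apply: leq_trans (mxrankM_maxl _ _) (rank_leq_col _).
  rewrite lt0n mxrank_eq0; apply/eqP => Y0.
  by have := c3 PY ord0; rewrite /Yent Y0 mxE => /eqP; rewrite eq_sym oner_eq0.
- apply/eqP; rewrite eqn_leq; apply/andP; split.
    by rewrite /r Xx; apply: leq_trans (mxrankM_maxl _ _) (rank_leq_col _).
  rewrite lt0n mxrank_eq0; apply/eqP => X0.
  by have := diagX PY EX ord0; rewrite X0 mxE => /eqP; rewrite eq_sym oner_eq0.
exists x; split => //.
- move=> i; have := diagX PY EX i; rewrite Xx rank1E -expr2 => /eqP.
  by rewrite sqrf_eq1 => /orP[/eqP->|/eqP->]; [left|right].
- by rewrite -Xx YM.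
Qed.
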